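(* Let $m\le n$ and $1\le k\le m$. Suppose $X = X^*$ is a nonzero $k$-block positive operator on $\mathcal{H}_n\otimes\mathcal{H}_m$, with maximal eigenvalue $\lambda_{max}$ and minimal eigenvalue $\lambda_{min}$. Then \[ \frac{\lambda_{min}}{\lambda_{max}} \ge 1 - \frac{m}{k}. \]
   Context: $\mathcal{H}_d=\mathbb{C}^d$ and $m\le n$. The Schmidt rank $SR(|v\rangle)$ of $|v\rangle\in\mathcal{H}_n\otimes\mathcal{H}_m$ is the rank of its coefficient matrix. A Hermitian $X$ is $k$-block positive if $\langle v|X|v\rangle\ge0$ for all $|v\rangle$ with $SR(|v\rangle)\le k$. Equivalently, the map associated to $X$ via the Choi–Jamiołkowski isomorphism is $k$-positive. *)

(* Defs.v *)
From HB Require Import structures.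
From mathcomp Require Import all_boot all_order all_algebra.
Set Implicit Arguments. Unset Strict Implicit. Unset Printing Implicit Defensive.
Import Order.TTheory GRing.Theory Num.Theory.
Local Open Scope ring_scope.

(* Complex scalars: any numeric closed field (e.g. algC, or complex R). *)

Definition adjmx (C : numClosedFieldType) (p q : nat) (A : 'M[C]_(p, q)) : 'M[C]_(q, p) :=
  map_mx Num.conj A^T.

Definition is_hermitian (C : numClosedFieldType) (N : nat) (X : 'M[C]_N) : Prop :=
  adjmx X = X.

(* Vectors of H_n (x) H_m = C^(n*m) are row vectors 'rV_(n*m); the coordinate
   of e_i (x) f_j is at index mxvec_index i j, so the coefficient matrix of v
   is vec_mx v : 'M_(n,m). *)
Definition schmidt_rank (C : numClosedFieldType) (n m : nat) (v : 'rV[C]_(n * m)) : nat :=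
  \rank (vec_mx v : 'M[C]_(n, m)).
Arguments schmidt_rank {C} n m v.

Definition qform (C : numClosedFieldType) (N : nat) (X : 'M[C]_N) (v : 'rV[C]_N) : C :=
  ((map_mx Num.conj v) *m X *m v^T) 0 0.

Definition block_positive {C : numClosedFieldType} (n m k : nat) (X : 'M[C]_(n * m)) : Prop :=
  is_hermitian X /\
  forall v : 'rV[C]_(n * m), (schmidt_rank n m v <= k)%N -> 0 <= qform X v.
Arguments block_positive {C} n m k X.

(* Main.v *)
Require Import Defs.
From HB Require Import structures.
From mathcomp Require Import all_boot all_order all_algebra.
From mathcomp Require Import ring.
Import Order.TTheory GRing.Theory Num.Theory.
Local Open Scope ring_scope.

Section S.
Variable C : numClosedFieldType.

Lemma sum_mxvec n m (F : 'I_(n * m) -> C) :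
  \sum_c F c = \sum_a \sum_b F (mxvec_index a b).
Proof.
rewrite pair_big /= (reindex (uncurry (@mxvec_index n m))) /=.
  by apply: eq_bigr => -[a b].
exact: curry_mxvec_bij.
Qed.


Lemma spectral_facts N (X : 'M[C]_N) : is_hermitian X ->
  let P := spectralmx X in let d := spectral_diag X in
  [/\ X = adjmx P *m diag_mx d *m P, P *m adjmx P = 1%:M,
      adjmx P *m P = 1%:M & forall i, d 0 i \is Num.real].
Proof.
move=> hX P d.
have Pu : P \is unitarymx by exact: spectral_unitarymx.
have hX' : X \is hermsymmx.
  by apply/is_hermitianmxP; rewrite expr0 scale1r; exact/esym.
split.
- rewrite /adjmx -invmx_unitary //; apply/orthomx_spectralP.
  exact: hermitian_normalmx.
- by apply/unitarymxP.
- by rewrite /adjmx -invmx_unitary // mulVmx // unitarymx_unit.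
- move=> i; have /mxOverP := hermitian_spectral_diag_real hX'; exact.
Qed.

Lemma qform_delta N (X : 'M[C]_N) c : qform X (delta_mx 0 c) = X c c.
Proof.
rewrite /qform.
have -> : map_mx Num.conj (delta_mx 0 c : 'rV[C]_N) = delta_mx 0 c.
  by apply/matrixP => i j; rewrite !mxE; case: (_ && _); rewrite ?conjC1 ?conjC0.
rewrite -rowE trmx_delta -colE !mxE.
done.
Qed.


Lemma qform_diag N (X P : 'M[C]_N) d w : X = adjmx P *m diag_mx d *m P ->
  qform X w = \sum_i d 0 i * (((P *m w^T) i 0)^* * (P *m w^T) i 0).
Proof.
move=> ->; rewrite /qform /adjmx !mulmxA.
have -> : map_mx Num.conj w *m map_mx Num.conj P^T = (map_mx Num.conj (P *m w^T))^T.
  by rewrite map_trmx trmx_mul trmxK map_mxM.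
rewrite -!mulmxA mulmxA mul_mx_diag !mxE; apply: eq_bigr => i _.
by rewrite !mxE mulrCA mulrA.
Qed.

Lemma row_nz N (P : 'M[C]_N) i : P *m adjmx P = 1%:M -> row i P != 0.
Proof.
move=> PP; apply/eqP => r0.
have : row i (P *m adjmx P) = row i 1%:M by rewrite PP.
rewrite row_mul r0 mul0mx => /rowP/(_ i); rewrite !mxE eqxx /=.
by move/eqP; rewrite eq_sym oner_eq0.
Qed.

Lemma eigen_d N (X P : 'M[C]_N) d i : X = adjmx P *m diag_mx d *m P ->
  P *m adjmx P = 1%:M -> eigenvalue X (d 0 i).
Proof.
move=> hX PP; apply/eigenvalueP; exists (row i P); last exact: row_nz.
rewrite -row_mul hX !mulmxA PP mul1mx mul_diag_mx.
by apply/rowP => j; rewrite !mxE.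
Qed.

Lemma eigen_in_d N (X P : 'M[C]_N) d c : X = adjmx P *m diag_mx d *m P ->
  adjmx P *m P = 1%:M -> P *m adjmx P = 1%:M -> eigenvalue X c -> exists i, c = d 0 i.
Proof.
move=> hX PP PP' /eigenvalueP [v vX vn0].
set z := v *m adjmx P.
have zP : z *m P = v by rewrite /z -mulmxA PP mulmx1.
have zd : z *m diag_mx d = c *: z.
  have := congr1 (mulmx^~ (adjmx P)) vX.
  rewrite hX !mulmxA -/z -scalemxAl -/z => <-.
  by rewrite /z -!mulmxA PP' mulmx1.
clearbody z.
have [j zj] : exists j, z 0 j != 0.
  apply/existsP; apply: contraR vn0 => /existsPn H.
  rewrite -zP.
  have -> : z = 0 by apply/rowP => j; have := H j; rewrite negbK => /eqP ->; rewrite mxE.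
  by rewrite mul0mx.
exists j; move: zd => /rowP/(_ j); rewrite mul_mx_diag !mxE => e.
by apply: (mulIf zj); rewrite -e mulrC.
Qed.


Lemma pos_eig N (X P : 'M[C]_N) d : X = adjmx P *m diag_mx d *m P ->
  P *m adjmx P = 1%:M -> (forall i, d 0 i \is Num.real) -> X != 0 ->
  (forall c, 0 <= X c c) -> exists i, 0 < d 0 i.
Proof.
move=> hX PP dr Xn0 Xcc.
have tr : \tr X = \sum_i d 0 i.
  by rewrite hX mxtrace_mulC mulmxA PP mul1mx mxtrace_diag.
have [i di|H] := pickP (fun i => 0 < d 0 i); first by exists i.
have dle : forall i, d 0 i <= 0.
  by move=> i; rewrite real_leNgt ?real0 // H.
have s0 : \sum_i - d 0 i = 0.
  apply/eqP; rewrite eq_le sumr_ge0 ?andbT; last by move=> i _; rewrite oppr_ge0.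
  by rewrite sumrN oppr_le0 -tr /mxtrace sumr_ge0.
have d0 : forall i, d 0 i = 0.
  move=> i; apply/eqP; rewrite -oppr_eq0; apply/eqP.
  by apply: (psumr_eq0P _ s0) => // j _; rewrite oppr_ge0.
case/negP: Xn0; rewrite hX; apply/eqP.
have -> : d = 0 by apply/rowP => j; rewrite d0 mxE.
by rewrite -[diag_mx 0]/(diag_mx (0 : 'rV[C]_N)) linear0 mulmx0 mul0mx.
Qed.


Lemma sum_delta (I : finType) (i0 : I) (F : I -> C) :
  \sum_i (i == i0)%:R * F i = F i0.
Proof.
rewrite (bigD1 i0) //= eqxx mul1r big1 ?addr0 // => i /negPf ->.
by rewrite mul0r.
Qed.

Lemma frob_tr p q (A B : 'M[C]_(p, q)) :
  \sum_a \sum_b (A a b)^* * B a b = \tr (adjmx A *m B).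
Proof.
rewrite /mxtrace exchange_big; apply: eq_bigr => b _; rewrite !mxE.
by apply: eq_bigr => a _; rewrite !mxE.
Qed.

Lemma norm_unitary N (P : 'M[C]_N) (w : 'rV[C]_N) : adjmx P *m P = 1%:M ->
  \sum_i ((P *m w^T) i 0)^* * (P *m w^T) i 0 = \sum_c (w 0 c)^* * w 0 c.
Proof.
move=> PP.
have -> : \sum_i ((P *m w^T) i 0)^* * (P *m w^T) i 0 =
          ((map_mx Num.conj (P *m w^T))^T *m (P *m w^T)) 0 0.
  by rewrite !mxE; apply: eq_bigr => i _; rewrite !mxE.
have -> : (map_mx Num.conj (P *m w^T))^T = map_mx Num.conj w *m adjmx P.
  by rewrite /adjmx map_trmx trmx_mul trmxK map_mxM.
rewrite -mulmxA (mulmxA (adjmx P)) PP mul1mx !mxE.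
by apply: eq_bigr => c _; rewrite !mxE.
Qed.

Section Win.
Variables (m' k : nat) (km : (k <= m'.+1)%N).

Definition Ew (t : 'I_m'.+1) : 'M[C]_(k, m'.+1) :=
  \matrix_(s, b) ((b == t + widen_ord km s)%:R).

Lemma Ew_orth t : Ew t *m (Ew t)^T = 1%:M.
Proof.
apply/matrixP => s s'; rewrite !mxE.
under eq_bigr do rewrite ?mxE.
rewrite sum_delta ?mxE; congr (_%:R).
rewrite (inj_eq (addrI t)).
have wi : injective (widen_ord km) by move=> x y /(congr1 val) /= /val_inj.
by rewrite (inj_eq wi).
Qed.

Lemma Ew_sum : \sum_t (Ew t)^T *m Ew t = (k%:R)%:M.
Proof.
apply/matrixP => b b'; rewrite summxE !mxE.
under eq_bigr do rewrite !mxE.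
rewrite exchange_big /=.
have ee : forall (t x : 'I_m'.+1), (b == t + x) = (t == b - x).
  by move=> t x; rewrite [RHS]eq_sym subr_eq.
under eq_bigr => s _.
  under eq_bigr => t _ do rewrite !mxE ee.
  rewrite sum_delta subrK.
  over.
rewrite sumr_const card_ord eq_sym.
case: (b == b') => /=.
  by rewrite mulr1n.
by rewrite mulr0n mul0rn.
Qed.

Lemma Ew_adj t : adjmx ((Ew t)^T *m Ew t) = (Ew t)^T *m Ew t.
Proof.
rewrite /adjmx trmx_mul trmxK map_mxM -map_trmx.
have -> : map_mx Num.conj (Ew t) = Ew t.
  by apply/matrixP => s b; rewrite !mxE conjC_nat.
done.
Qed.

Lemma Ew_idem t : (Ew t)^T *m Ew t *m ((Ew t)^T *m Ew t) = (Ew t)^T *m Ew t.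
Proof. by rewrite mulmxA -(mulmxA _ (Ew t)) Ew_orth mulmx1. Qed.

End Win.
Arguments Ew {m' k} km t.


Lemma adjmxM p q r (A : 'M[C]_(p, q)) (B : 'M[C]_(q, r)) :
  adjmx (A *m B) = adjmx B *m adjmx A.
Proof. by rewrite /adjmx trmx_mul map_mxM. Qed.

Section Main.
Variables (n m' k : nat) (km : (k <= m'.+1)%N) (P : 'M[C]_(n * m'.+1)) (i0 : 'I_(n * m'.+1)).
Hypothesis PP : P *m adjmx P = 1%:M.
Hypothesis PP' : adjmx P *m P = 1%:M.

Let R : 'M[C]_(n, m'.+1) := \matrix_(a, b) (P i0 (mxvec_index a b))^*.
Let D t := (Ew km t)^T *m Ew km t.
Let qt t := \tr (adjmx R *m R *m D t).

Lemma Q1 : \tr (adjmx R *m R) = 1.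
Proof.
rewrite -frob_tr.
have : (P *m adjmx P) i0 i0 = 1 by rewrite PP mxE eqxx.
rewrite !mxE sum_mxvec => <-; apply: eq_bigr => a _; apply: eq_bigr => b _.
by rewrite !mxE conjCK mulrC.
Qed.

Lemma Q2 : \sum_t qt t = k%:R.
Proof.
rewrite /qt -raddf_sum /= -mulmx_sumr /D Ew_sum mul_mx_scalar mxtraceZ Q1.
by rewrite mulr1.
Qed.

Lemma Q3 t : \tr (adjmx (R *m D t) *m (R *m D t)) = qt t.
Proof.
rewrite adjmxM /D Ew_adj -!mulmxA mxtrace_mulC -!mulmxA.
by rewrite Ew_orth mulmx1 mxtrace_mulC /qt /D !mulmxA.
Qed.

Lemma Q3' t : 0 <= qt t.
Proof.
rewrite -Q3 -frob_tr; apply: sumr_ge0 => a _; apply: sumr_ge0 => b _.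
by rewrite mulrC mul_conjC_ge0.
Qed.

Lemma Q4 : exists t, k%:R <= (m'.+1)%:R * qt t.
Proof.
have [t Ht|H] := pickP (fun t => k%:R <= (m'.+1)%:R * qt t); first by exists t.
exfalso.
have lt : forall t, (m'.+1)%:R * qt t < k%:R.
  move=> t; have := H t; move/negbT; rewrite /= real_leNgt ?negbK //;
  by apply: ger0_real; rewrite ?mulr_ge0 ?ler0n ?Q3'.
have hs : has predT (index_enum 'I_m'.+1).
  by apply/hasP; exists ord0 => //; rewrite mem_index_enum.
have := @ltr_sum _ _ (index_enum 'I_m'.+1) predT _ (fun=> k%:R) hs (fun t _ => lt t).
by rewrite -mulr_sumr Q2 sumr_const card_ord mulr_natl ltxx.
Qed.

Lemma main_bound (X : 'M[C]_(n * m'.+1)) d lmax :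
  X = adjmx P *m diag_mx d *m P ->
  (forall i, d 0 i <= lmax) ->
  (forall v, (schmidt_rank n m'.+1 v <= k)%N -> 0 <= qform X v) ->
  exists q, [/\ 0 <= q, k%:R <= (m'.+1)%:R * q &
     0 <= d 0 i0 * (q * q) + lmax * (q - q * q)].
Proof.
move=> hX dle bp.
have [t Ht] := Q4; exists (qt t); split => //; first exact: Q3'.
set w := mxvec (R *m D t).
have SR : (schmidt_rank n m'.+1 w <= k)%N.
  rewrite /schmidt_rank mxvecK /D mulmxA.
  exact: leq_trans (mxrankM_maxr _ _) (rank_leq_row _).
have := bp w SR; rewrite (@qform_diag _ X P d w hX).
have ny := @norm_unitary _ P w PP'.
set y := P *m w^T in ny *.
have y0 : y i0 0 = qt t.
  rewrite /y mxE sum_mxvec /qt -mulmxA -frob_tr.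
  apply: eq_bigr => a _; apply: eq_bigr => b _.
  by rewrite [w^T _ _]mxE mxvecE [R a b]mxE conjCK.
have ny' : \sum_i (y i 0)^* * y i 0 = qt t.
  rewrite ny sum_mxvec -Q3 -frob_tr.
  by apply: eq_bigr => a _; apply: eq_bigr => b _; rewrite mxvecE.
move/le_trans; apply.
rewrite (bigD1 i0) //= y0 geC0_conj ?Q3' // lerD2l.
rewrite (bigD1 i0) //= y0 geC0_conj ?Q3' // in ny'.
have -> : qt t - qt t * qt t = \sum_(i | i != i0) (y i 0)^* * y i 0.
  by apply/eqP; rewrite subr_eq -{1}ny' addrC.
rewrite mulr_sumr; apply: ler_sum => i _; apply: ler_wpM2r => //.
by rewrite mulrC mul_conjC_ge0.
Qed.

End Main.

End S.

Lemma final_alg (C : numFieldType) (K M q dd lmax : C) : 0 < K -> K <= M -> 0 <= q ->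
  K <= M * q -> 0 < lmax -> dd \is Num.real ->
  0 <= dd * (q * q) + lmax * (q - q * q) -> 1 - M / K <= dd / lmax.
Proof.
move=> K0 KM q0' KqM l0 ddr h.
have M0 : 0 <= M by apply: le_trans (ltW K0) KM.
have q0 : 0 < q.
  rewrite lt_def q0' andbT; apply/eqP => qz.
  by move: KqM; rewrite qz mulr0 => /(lt_le_trans K0); rewrite ltxx.
have h1 : 0 <= dd * q + lmax * (1 - q).
  have e : dd * (q * q) + lmax * (q - q * q) = q * (dd * q + lmax * (1 - q)) by ring.
  by rewrite -(pmulr_rge0 _ q0) -e.
rewrite ler_pdivlMr // -(ler_pM2r K0).
have e2 : (1 - M / K) * lmax * K = (K - M) * lmax.
  by field; rewrite gt_eqF.
rewrite e2.
case: (real_ge0P ddr) => [dd0|dd0].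
  apply: (@le_trans _ _ 0); last by rewrite mulr_ge0 // ltW.
  by rewrite mulr_le0_ge0 ?subr_le0 // ltW.
apply: (@le_trans _ _ ((M * q - M) * lmax)).
  by apply: ler_wpM2r; [exact: ltW | exact: lerB KqM (lexx M)].
have -> : (M * q - M) * lmax = M * (lmax * (q - 1)) by ring.
apply: (@le_trans _ _ (M * (dd * q))).
  apply: ler_wpM2l => //; rewrite -subr_ge0.
  have -> : dd * q - lmax * (q - 1) = dd * q + lmax * (1 - q) by ring.
  exact: h1.
have -> : M * (dd * q) = (M * q) * dd by ring.
have -> : dd * K = K * dd by ring.
by apply: ler_wnM2r => //; exact: ltW.
Qed.

Theorem corollary5p5 (C : numClosedFieldType) (n m k : nat)
  (X : 'M[C]_(n * m)) (lmax lmin : C) :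
  (m <= n)%N -> (1 <= k)%N -> (k <= m)%N ->
  is_hermitian X -> X != 0 -> block_positive n m k X ->
  eigenvalue X lmax -> (forall c, eigenvalue X c -> c <= lmax) ->
  eigenvalue X lmin -> (forall c, eigenvalue X c -> lmin <= c) ->
  1 - m%:R / k%:R <= lmin / lmax.
Proof.
move=> mn k1 km hX Xn0 [_ bp] elmax lmaxP elmin lminP.
destruct m as [|m'].
  by move: km; rewrite leqn0 => /eqP k0; rewrite k0 in k1.
have [Xe PP PP' dr] := @spectral_facts _ _ X hX.
set P := spectralmx X in Xe PP PP'.
set d := spectral_diag X in Xe dr.
have Xcc : forall c, 0 <= X c c.
  move=> c; rewrite -(@qform_delta _ _ X c); apply: bp.
  rewrite /schmidt_rank; case/mxvec_indexP: c => a b.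
  by rewrite vec_mx_delta mxrank_delta.
have eig i := @eigen_d _ _ X P d i Xe PP.
have [i di] := @pos_eig _ _ X P d Xe PP dr Xn0 Xcc.
have l0 : 0 < lmax := lt_le_trans di (lmaxP _ (eig i)).
have [j ->] := @eigen_in_d _ _ X P d lmin Xe PP' PP elmin.
have [q [q0 kq hq]] := @main_bound _ n m' k km P j PP PP' X d lmax Xe
   (fun i => lmaxP _ (eig i)) bp.
by apply: final_alg hq => //; rewrite ?ltr0n ?ler_nat.
Qed.
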